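(* Let $L$ be a finite simplicial complex and $H\subseteq L$ a hypergraph, with $\mathrm{Ext}=\Delta\gamma\delta\gamma$ and $\mathrm{Int}=\delta\gamma\Delta\gamma$. Let $r$ be the smallest non-negative integer with $\mathrm{Ext}^r(\gamma H)=L$ and $t$ the smallest non-negative integer with $\mathrm{Int}^t(H)=\emptyset$ (assuming both exist). Then $t\in\{r-1,r,r+1\}$.
   Context: $L$ is a finite collection of nonempty sets closed under nonempty subsets; hypergraphs in $L$ are subsets of $L$. $\Delta H=\{\sigma\in L:\exists\tau\in H,\sigma\subseteq\tau\}$, $\delta H=\{\sigma\in L:\text{every nonempty }\tau\subseteq\sigma\text{ lies in }H\}$, $\gamma H=L\setminus H$; $T^0$ is the identity. *)

(* Defs.v *)
From mathcomp Require Import all_boot.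
Set Implicit Arguments. Unset Strict Implicit. Unset Printing Implicit Defensive.

(* A finite simplicial complex L on a finite vertex type T: a finite collection
   of nonempty sets closed under nonempty subsets. Hypergraphs in L are subsets of L. *)
Definition simplicial_complex (T : finType) (L : {set {set T}}) : Prop :=
  set0 \notin L /\
  (forall s t : {set T}, s \in L -> t != set0 -> t \subset s -> t \in L).

Section Ops.
Variables (T : finType) (L : {set {set T}}).

Definition Delta (H : {set {set T}}) : {set {set T}} :=
  [set s in L | [exists t in H, s \subset t]].

Definition delta (H : {set {set T}}) : {set {set T}} :=
  [set s in L | [forall t : {set T}, ((t != set0) && (t \subset s)) ==> (t \in H)]].

Definition gamma (H : {set {set T}}) : {set {set T}} := L :\: H.

Definition Ext (H : {set {set T}}) : {set {set T}} := Delta (gamma (delta (gamma H))).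
Definition Int (H : {set {set T}}) : {set {set T}} := delta (gamma (Delta (gamma H))).
End Ops.

(* Main.v *)
Require Import Defs.
From mathcomp Require Import all_boot.
Set Implicit Arguments.

Lemma iter_swap (A : Type) (f g : A -> A) k x :
  iter k.+1 (fun y => f (g y)) x = f (iter k (fun y => g (f y)) (g x)).
Proof.
elim: k => [|k IH] //. by rewrite [LHS]iterS IH.
Qed.

Section S.
Variables (T : finType) (L : {set {set T}}).
Implicit Types X Y : {set {set T}}.

Definition Dl (Y : {set {set T}}) := gamma L (Delta L (gamma L Y)).

Lemma delta_mono X Y : X \subset Y -> delta L X \subset delta L Y.
Proof.
move=> XY; apply/subsetP=> s; rewrite !inE => /andP[-> /forallP H] /=.
apply/forallP=> u; apply/implyP=> /(implyP (H u)) h; exact: (subsetP XY).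
Qed.

Lemma Delta_mono X Y : X \subset Y -> Delta L X \subset Delta L Y.
Proof.
move=> XY; apply/subsetP=> s; rewrite !inE => /andP[-> /existsP[u /andP[uX su]]] /=.
apply/existsP; exists u; by rewrite (subsetP XY).
Qed.

Lemma gamma_anti X Y : X \subset Y -> gamma L Y \subset gamma L X.
Proof. move=> XY; rewrite /gamma; exact: setDS. Qed.

Lemma Dl_mono X Y : X \subset Y -> Dl X \subset Dl Y.
Proof. by move=> XY; rewrite /Dl gamma_anti // Delta_mono // gamma_anti. Qed.

Lemma delta_sub X : set0 \notin L -> delta L X \subset X.
Proof.
move=> L0; apply/subsetP=> s; rewrite inE => /andP[sL /forallP H].
apply: (implyP (H s)); rewrite subxx andbT.
by apply/negP=> /eqP e; rewrite -e sL in L0.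
Qed.

Lemma Dl_sub X : Dl X \subset X.
Proof.
apply/subsetP=> s; rewrite /Dl /gamma !inE => /andP[H sL].
apply/negPn/negP=> sX; move: H; rewrite sL /= => /negP; apply.
apply/existsP; exists s; by rewrite !inE sX sL subxx.
Qed.

Lemma Dl_subL X : Dl X \subset L.
Proof. exact: subsetDl. Qed.

Lemma iter_mono (h : {set {set T}} -> {set {set T}}) k X Y :
  (forall X Y, X \subset Y -> h X \subset h Y) ->
  X \subset Y -> iter k h X \subset iter k h Y.
Proof. move=> hm XY; elim: k => //= k IH; exact: hm. Qed.

End S.
Lemma gammaK T (L Z : {set {set T}}) : Z \subset L -> gamma L (gamma L Z) = Z.
Proof.
move=> ZL; apply/setP=> s; rewrite /gamma !inE.
case sZ: (s \in Z); case sL: (s \in L) => //=; by rewrite (subsetP ZL) in sL.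
Qed.

Lemma Delta_subL T (L Z : {set {set T}}) : Delta L Z \subset L.
Proof. by apply/subsetP=> s; rewrite inE => /andP[]. Qed.

Lemma gamma_L T (L Z : {set {set T}}) : Z \subset L -> (gamma L Z == L) = (Z == set0).
Proof.
move=> ZL; apply/idP/idP => [/eqP e|/eqP ->]; last by rewrite /gamma setD0.
rewrite -subset0; apply/subsetP=> s sZ.
have : s \in gamma L Z by rewrite e (subsetP ZL).
by rewrite inE sZ.
Qed.

Theorem corollary3p5 (T : finType) (L H : {set {set T}}) (r t : nat) :
  simplicial_complex L ->
  H \subset L ->
  iter r (Ext L) (gamma L H) = L ->
  (forall k, k < r -> iter k (Ext L) (gamma L H) <> L) ->
  iter t (Int L) H = set0 ->
  (forall k, k < t -> iter k (Int L) H <> set0) ->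
  t = r.-1 \/ t = r \/ t = r.+1.
Proof.
move=> [L0 _] HL Er Emin It Imin.
set F := fun Y => Dl L (delta L Y).
set G := fun Y => delta L (Dl L Y).
have E : forall k, iter k F H \subset L /\
   iter k (Ext L) (gamma L H) = gamma L (iter k F H).
  elim=> [|k [IH1 IH2]] //=.
  split; first exact: Dl_subL.
  rewrite IH2 /Ext gammaK // /F /Dl gammaK //; exact: Delta_subL.
have Fr : iter r F H = set0.
  by case: (E r) => h1 h2; apply/eqP; rewrite -(gamma_L h1) -h2 Er.
have Fmin : forall k, k < r -> iter k F H <> set0.
  move=> k kr e; apply: (Emin k kr); case: (E k) => h3 ->; apply/eqP.
  by rewrite (gamma_L h3) e.
have It' : iter t G H = set0 by [].
have Gr : iter r.+1 G H = set0.
  apply/eqP; rewrite -subset0 iter_swap.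
  apply: subset_trans (delta_sub L set0 L0).
  apply: delta_mono; rewrite -Fr; apply: iter_mono; first by move=> X Y XY; apply/Dl_mono/delta_mono.
  exact: Dl_sub.
have Ft : iter t.+1 F H = set0.
  apply/eqP; rewrite -subset0 iter_swap.
  apply: subset_trans (Dl_sub L set0).
  apply: Dl_mono; rewrite -It'; apply: iter_mono; first by move=> X Y XY; apply/delta_mono/Dl_mono.
  exact: delta_sub.
have h1 : t <= r.+1.
  rewrite leqNgt; apply/negP=> lt; exact: (Imin _ lt Gr).
have h2 : r <= t.+1.
  rewrite leqNgt; apply/negP=> lt; exact: (Fmin _ lt Ft).
clear -h1 h2.
have : t.+1 = r \/ t = r \/ t = r.+1.
  rewrite leq_eqVlt ltnS leq_eqVlt in h1.
  case/or3P: h1 => [/eqP->|/eqP->|lt]; auto.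
  left; apply/eqP; rewrite eqn_leq h2 andbT; exact: lt.
by case=> [<-|[]]; auto.
Qed.
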